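(* A clone $\tau$-algebra $\mathbf C$ is minimal if and only if $\mathbf C$ is isomorphic to the clone $\mathcal V$-algebra $\mathbf{Cl}(\mathcal V)$ for some variety $\mathcal V$ of $\tau$-algebras.
   Context: A clone $\tau$-algebra is an algebra $\mathbf C=(C,\sigma^{\mathbf C}\ (\sigma\in\tau),q_n^{\mathbf C}\ (n\ge0),\mathsf e_i^{\mathbf C}\ (i\ge1))$ with $\mathsf e_i$ nullary, $q_n$ of arity $n+1$, satisfying: (C1) $q_n(\mathsf e_i,x_1,\dots,x_n)=x_i$ ($1\le i\le n$); (C2) $q_n(\mathsf e_j,x_1,\dots,x_n)=\mathsf e_j$ ($j>n$); (C3) $q_n(x,\mathsf e_1,\dots,\mathsf e_n)=x$; (C4) $q_k(x,y_1,\dots,y_k)=q_n(x,y_1,\dots,y_k,\mathsf e_{k+1},\dots,\mathsf e_n)$ ($n>k$); (C5) $q_n(q_n(x,\mathbf y),\mathbf z)=q_n(x,q_n(y_1,\mathbf z),\dots,q_n(y_n,\mathbf z))$; (C6) $q_n(\sigma(x_1,\dots,x_k),\mathbf y)=\sigma(q_n(x_1,\mathbf y),\dots,q_n(x_k,\mathbf y))$ for $\sigma\in\tau$ of arity $k$. $\mathbf C$ is minimal if $C$ equals the smallest subset of $C$ containing all $\mathsf e_i^{\mathbf C}$ and closed under the operations $\sigma^{\mathbf C}$ ($\sigma\in\tau$). For a variety $\mathcal V$ of $\tau$-algebras with free algebra $\mathbf F_{\mathcal V}$ over $\{v_1,v_2,\dots\}$, the clone $\mathcal V$-algebra $\mathbf{Cl}(\mathcal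 V)=(\mathbf F_{\mathcal V},q_n^{\mathbf F},\mathsf e_i^{\mathbf F})$ has $\mathsf e_i^{\mathbf F}=v_i$ and $q_n^{\mathbf F}(a,b_1,\dots,b_n)=s(a)$, where $s$ is the unique endomorphism of $\mathbf F_{\mathcal V}$ with $s(v_i)=b_i$ for $i\le n$ and $s(v_i)=v_i$ for $i>n$. *)

(* Defs.v *)
From mathcomp Require Import all_boot.
From Stdlib Require Import ClassicalEpsilon.
Set Implicit Arguments. Unset Strict Implicit. Unset Printing Implicit Defensive.

Section CloneAlgebras.
Variable sym : Type.
Variable ar : sym -> nat.

(* Convention: indices are 0-based.  The nullary constant [ce C i]
   (i : nat) stands for the paper's e_{i+1}, and the variable [Var i]
   for v_{i+1}. *)
Record clone_alg := CloneAlg {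
  ccar :> Type;
  cop : forall s : sym, ('I_(ar s) -> ccar) -> ccar;
  cq : forall n : nat, ccar -> ('I_n -> ccar) -> ccar;
  ce : nat -> ccar }.

Definition pad (C : clone_alg) (k n : nat) (y : 'I_k -> C) (i : 'I_n) : C :=
  match (insub (val i) : option 'I_k) with
  | Some j => y j
  | None => ce C i
  end.

Definition is_clone_alg (C : clone_alg) : Prop :=
  (forall n (y : 'I_n -> C) (i : 'I_n), @cq C n (ce C i) y = y i) /\
      (forall n (y : 'I_n -> C) (j : nat), n <= j -> @cq C n (ce C j) y = ce C j) /\
      (forall n (x : C), @cq C n x (fun i : 'I_n => ce C i) = x) /\
      (forall k n (x : C) (y : 'I_k -> C), k < n -> @cq C k x y = @cq C n x (@pad C k n y)) /\
      (forall n (x : C) (y z : 'I_n -> C),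
                  @cq C n (@cq C n x y) z = @cq C n x (fun i => @cq C n (y i) z)) /\
      (forall (s : sym) n (xs : 'I_(ar s) -> C) (y : 'I_n -> C),
                  @cq C n (@cop C s xs) y = @cop C s (fun j => @cq C n (xs j) y)).

Definition minimal (C : clone_alg) : Prop :=
  forall P : C -> Prop,
    (forall i, P (ce C i)) ->
    (forall (s : sym) (xs : 'I_(ar s) -> C), (forall j, P (xs j)) -> P (@cop C s xs)) ->
    forall c : C, P c.

Definition clone_iso (C D : clone_alg) : Prop :=
  exists f : C -> D,
    [/\ bijective f,
        (forall (s : sym) (xs : 'I_(ar s) -> C), f (@cop C s xs) = @cop D s (fun j => f (xs j))),
        (forall n (x : C) (y : 'I_n -> C), f (@cq C n x y) = @cq D n (f x) (fun i => f (y i))) &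
        (forall i, f (ce C i) = ce D i)].

Inductive term : Type :=
  | Var of nat
  | App (s : sym) of ('I_(ar s) -> term).

Record alg := Alg {
  acar :> Type;
  aop : forall s : sym, ('I_(ar s) -> acar) -> acar }.

Fixpoint eval (A : alg) (v : nat -> A) (t : term) : A :=
  match t with
  | Var i => v i
  | App s ts => @aop A s (fun j => eval v (ts j))
  end.

Definition satisfies (A : alg) (Sigma : term -> term -> Prop) : Prop :=
  forall s t, Sigma s t -> forall v : nat -> A, eval v s = eval v t.

Definition is_variety (V : alg -> Prop) : Prop :=
  exists Sigma : term -> term -> Prop, forall A : alg, V A <-> satisfies A Sigma.

Definition veq (V : alg -> Prop) (s t : term) : Prop :=
  forall A : alg, V A -> forall v : nat -> A, eval v s = eval v t.

Fixpoint subst (f : nat -> term) (t : term) : term :=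
  match t with
  | Var i => f i
  | App s ts => @App s (fun j => subst f (ts j))
  end.

(* The free algebra F_V over {v_0, v_1, ...}: terms modulo the identities
   of V, represented as equivalence classes (predicates on terms). *)
Definition cls (V : alg -> Prop) (t : term) : term -> Prop := fun s => veq V s t.
Definition Fcar (V : alg -> Prop) : Type := {P : term -> Prop | exists t, P = cls V t}.
Definition Fin (V : alg -> Prop) (t : term) : Fcar V :=
  exist _ (cls V t) (ex_intro _ t erefl).
Definition rep (V : alg -> Prop) (a : Fcar V) : term :=
  proj1_sig (constructive_indefinite_description _ (proj2_sig a)).

Definition Fop (V : alg -> Prop) (s : sym) (xs : 'I_(ar s) -> Fcar V) : Fcar V :=
  Fin V (@App s (fun j => rep (xs j))).
Definition Fe (V : alg -> Prop) (i : nat) : Fcar V := Fin V (Var i).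
(* q_n(a, b_0..b_{n-1}) = s(a), s the endomorphism of F_V induced by
   v_i |-> b_i (i < n), v_i |-> v_i (i >= n). *)
Definition Fq (V : alg -> Prop) (n : nat) (a : Fcar V) (b : 'I_n -> Fcar V) : Fcar V :=
  Fin V (subst (fun i => match (insub i : option 'I_n) with
                         | Some j => rep (b j)
                         | None => Var i
                         end) (rep a)).

Definition Cl (V : alg -> Prop) : clone_alg := @CloneAlg (Fcar V) (@Fop V) (@Fq V) (@Fe V).

End CloneAlgebras.

(* Main.v *)
Require Import Defs.
From mathcomp Require Import all_boot.
From Stdlib Require Import ClassicalEpsilon FunctionalExtensionality PropExtensionality ProofIrrelevance.
Set Implicit Arguments. Unset Strict Implicit. Unset Printing Implicit Defensive.

Lemma veq_sym (sym : Type) (ar : sym -> nat) (V : alg ar -> Prop) s t :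
  veq V s t -> veq V t s.
Proof. by move=> H A HA v; rewrite H. Qed.

Lemma veq_trans (sym : Type) (ar : sym -> nat) (V : alg ar -> Prop) s t u :
  veq V s t -> veq V t u -> veq V s u.
Proof. by move=> H1 H2 A HA v; rewrite H1 // H2. Qed.

Lemma sig_eq' (T : Type) (P : T -> Prop) (a b : {x | P x}) :
  proj1_sig a = proj1_sig b -> a = b.
Proof.
case: a => x px; case: b => y py /= E; subst y; f_equal; apply: proof_irrelevance.
Qed.

Lemma Fin_eq (sym : Type) (ar : sym -> nat) (V : alg ar -> Prop) s t :
  veq V s t -> Fin V s = Fin V t.
Proof.
move=> H; apply: sig_eq' => /=; apply: functional_extensionality => u.
apply: propositional_extensionality; rewrite /cls; split => Hu.
- exact: veq_trans Hu H.
- exact: veq_trans Hu (veq_sym H).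
Qed.

Lemma Fin_inj (sym : Type) (ar : sym -> nat) (V : alg ar -> Prop) s t :
  Fin V s = Fin V t -> veq V s t.
Proof.
move=> H; have := f_equal (@proj1_sig _ _) H => /= E.
have : cls V s s by move=> A HA v.
by rewrite E.
Qed.

Lemma Fin_rep (sym : Type) (ar : sym -> nat) (V : alg ar -> Prop) (a : Fcar V) :
  Fin V (rep a) = a.
Proof.
rewrite /rep; case: (constructive_indefinite_description _ _) => t /= Ht.
by apply: sig_eq' => /=.
Qed.

Lemma rep_Fin (sym : Type) (ar : sym -> nat) (V : alg ar -> Prop) t :
  veq V (rep (Fin V t)) t.
Proof. apply: Fin_inj; exact: Fin_rep. Qed.

Lemma Cl_minimal (sym : Type) (ar : sym -> nat) (V : alg ar -> Prop) :
  minimal (Cl V).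
Proof.
move=> P He Hop a; rewrite -(Fin_rep a); elim: (rep a) => [i|s ts IH].
  exact: (He i).
have := Hop s (fun j => Fin V (ts j)) IH.
rewrite /= /Fop; congr P; apply: Fin_eq => A HA v /=.
congr aop; apply: functional_extensionality => j; exact: rep_Fin.
Qed.

Lemma iso_minimal (sym : Type) (ar : sym -> nat) (C D : clone_alg ar) :
  clone_iso C D -> minimal D -> minimal C.
Proof.
case=> f [[g fK gK] Hop _ He] HD P HPe HPop c.
rewrite -(fK c); apply: (HD (fun d => P (g d))) => [i|s xs IH].
  by rewrite -He fK.
have -> : xs = (fun j => f (g (xs j))) by apply: functional_extensionality => j; rewrite gK.
by rewrite -Hop fK; apply: HPop.
Qed.

Definition algC (sym : Type) (ar : sym -> nat) (C : clone_alg ar) : alg ar :=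
  @Alg _ ar C (@cop _ ar C).
Definition hC (sym : Type) (ar : sym -> nat) (C : clone_alg ar) (t : term ar) : C :=
  @eval _ ar (algC C) (ce C) t.
Arguments hC {sym ar} C t.

Lemma eval_cq (sym : Type) (ar : sym -> nat) (C : clone_alg ar) :
  is_clone_alg C -> forall t, exists n, forall m, n <= m -> forall w : nat -> C,
    @eval _ ar (algC C) w t = cq (hC C t) (fun i : 'I_m => w i).
Proof.
case=> [C1 [C2 [C3 [C4 [C5 C6]]]]].
elim=> [i|s ts IH].
  exists i.+1 => m Hm w.
  have := C1 m (fun i : 'I_m => w i) (Ordinal Hm). simpl. by move=> ->.
pose N j := proj1_sig (constructive_indefinite_description _ (IH j)).
have HN j : forall m, N j <= m -> forall w : nat -> C,
    @eval _ ar (algC C) w (ts j) = cq (hC C (ts j)) (fun i : 'I_m => w i).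
  exact: (proj2_sig (constructive_indefinite_description _ (IH j))).
exists (\max_(j < ar s) N j) => m Hm w.
rewrite /hC /= C6; congr cop; apply: functional_extensionality => j.
apply: HN; apply: leq_trans Hm; exact: (@leq_bigmax _ (fun j => N j) j).
Qed.

Lemma hC_subst (sym : Type) (ar : sym -> nat) (C : clone_alg ar) :
  is_clone_alg C -> forall n (sg : nat -> term ar), (forall i, n <= i -> sg i = Var ar i) ->
  forall t, hC C (subst sg t) = cq (hC C t) (fun i : 'I_n => hC C (sg i)).
Proof.
case=> [C1 [C2 [C3 [C4 [C5 C6]]]]] n sg Hsg.
elim=> [i|s ts IH].
  case: (ltnP i n) => Hi.
    have := C1 n (fun i : 'I_n => hC C (sg i)) (Ordinal Hi). simpl. by move=> ->.
  by rewrite /= Hsg // /hC /= C2.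
rewrite /hC /= C6; congr cop; apply: functional_extensionality => j; exact: IH.
Qed.

Lemma surj_hC (sym : Type) (ar : sym -> nat) (C : clone_alg ar) :
  minimal C -> forall c : C, exists t, hC C t = c.
Proof.
move=> HM; apply: HM => [i|s xs IH]; first by exists (Var ar i).
pose ts j := proj1_sig (constructive_indefinite_description _ (IH j)).
exists (App ts); rewrite /hC /=; congr cop; apply: functional_extensionality => j.
exact: (proj2_sig (constructive_indefinite_description _ (IH j))).
Qed.

Theorem corollary11p9 (sym : Type) (ar : sym -> nat) (C : clone_alg ar) :
  is_clone_alg C ->
  (minimal C <-> exists V : alg ar -> Prop, is_variety V /\ clone_iso C (Cl V)).
Proof.
move=> HC; split; last first.
  case=> V [_ Hiso]. exact: (iso_minimal Hiso (@Cl_minimal _ _ V)).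
move=> HM.
pose Sigma (s t : term ar) := hC C s = hC C t.
pose V (A : alg ar) := satisfies A Sigma.
have CV : V (algC C).
  move=> s t Hst w.
  have [n1 H1] := eval_cq HC s; have [n2 H2] := eval_cq HC t.
  rewrite (H1 (maxn n1 n2)) ?leq_maxl // (H2 (maxn n1 n2)) ?leq_maxr //.
  by rewrite Hst.
have veqE s t : veq V s t <-> hC C s = hC C t.
  split; last by move=> H A HA v; apply: HA.
  move=> H; exact: (H _ CV (ce C)).
exists V; split; first by exists Sigma.
pose sec c := proj1_sig (constructive_indefinite_description _ (surj_hC HM c)).
have secE c : hC C (sec c) = c.
  exact: (proj2_sig (constructive_indefinite_description _ (surj_hC HM c))).
pose f c := Fin V (sec c).
have fE c t : hC C t = c -> f c = Fin V t.
  by move=> H; apply: Fin_eq; apply/veqE; rewrite secE H.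
have h_rep c : hC C (rep (f c)) = c.
  by rewrite -[RHS]secE; apply/veqE; apply: rep_Fin.
exists f; split.
- exists (fun a => hC C (rep a)) => [c|a]; first exact: h_rep.
  by rewrite (fE _ (rep a)) // Fin_rep.
- move=> s xs; rewrite /= /Fop; apply: fE; rewrite /hC /=; congr cop.
  by apply: functional_extensionality => j; apply: h_rep.
- move=> n x y; rewrite /= /Fq; apply: fE.
  rewrite (hC_subst HC (n := n)); last first.
    move=> i Hi; case: insubP => // j Hj Ej; move: Hi; rewrite leqNgt; case: (i < n) Hj => //.
  rewrite h_rep; congr cq; apply: functional_extensionality => i.
  by rewrite valK h_rep.
- by move=> i; apply: fE.
Qed.
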